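(* Let $m\in\mathbb{N}$, let $\mathbb{R}^m$ carry a norm, let $\mathcal{Y}\subseteq\mathbb{R}^m$ be bounded and let $\mathfrak{C}$ be a simplicial cover of $\mathcal{Y}$. Let $\{g_{\boldsymbol{v}}:\boldsymbol{v}\in V(\mathfrak{C})\}$ be the barycentric vertex interpolation function set for $\mathfrak{C}$, let $\{g_1,\ldots,g_k\}$ be obtained by removing one function from it, and let $\boldsymbol{g}:\mathcal{Y}\to\mathbb{R}^k$, $\boldsymbol{g}(\boldsymbol{x}):=(g_1(\boldsymbol{x}),\ldots,g_k(\boldsymbol{x}))^\top$. Assume $\operatorname{int}(\mathcal{Y})\cap\operatorname{int}(C)\ne\emptyset$ for all $C\in\mathfrak{C}$. Then there exist $\boldsymbol{x}_1,\ldots,\boldsymbol{x}_{k+1}\in\mathcal{Y}$ such that $\boldsymbol{g}(\boldsymbol{x}_1),\ldots,\boldsymbol{g}(\boldsymbol{x}_{k+1})$ are affinely independent.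
   Context: Faces: a convex $C'\subseteq C$ is a face of convex $C$ if $\lambda x_1+(1-\lambda)x_2\in C'$ ($0<\lambda<1$, $x_1,x_2\in C$) implies $x_1,x_2\in C'$; $V(C)$ is the set of extreme points. A simplicial cover of a bounded $\mathcal{Y}\subseteq\mathbb{R}^m$ is a finite collection $\mathfrak{C}$ of $m$-simplices whose union contains $\mathcal{Y}$ such that any two members with non-empty intersection intersect in a face of both. $\mathfrak{F}(\mathfrak{C})$: non-empty faces of members; $V(\mathfrak{C}):=\bigcup_{C}V(C)$. Every point $\boldsymbol{x}\in\bigcup_{C\in\mathfrak{C}}C$ lies in $\operatorname{relint}(F)$ for a unique $F\in\mathfrak{F}(\mathfrak{C})$ and has a unique representation $\boldsymbol{x}=\sum_{\boldsymbol{w}\in V(F)}\lambda^F_{\boldsymbol{w}}(\boldsymbol{x})\boldsymbol{w}$ with positive weights summing to $1$; the barycentric vertex interpolation function set is defined by $g_{\boldsymbol{v}}(\boldsymbol{x}):=\lambda^F_{\boldsymbol{v}}(\boldsymbol{x})$ if $\boldsymbol{v}\in V(F)$ and $g_{\boldsymbol{v}}(\boldsymbol{x}):=0$ otherwise, for $\boldsymbol{v}\in V(\mathfrak{C})$. *)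

(* Defs.v *)
From HB Require Import structures.
From mathcomp Require Import all_boot all_order all_algebra.
From mathcomp Require Import boolp classical_sets functions cardinality fsbigop reals.
Set Implicit Arguments. Unset Strict Implicit. Unset Printing Implicit Defensive.
Import Order.TTheory GRing.Theory Num.Theory.
Local Open Scope classical_set_scope.
Local Open Scope ring_scope.

Section Defs.
Variables (R : realType) (m : nat).
Local Notation V := 'rV[R]_m.

Definition is_norm (N : V -> R) : Prop :=
  [/\ forall x, N x = 0 -> x = 0,
      forall (a : R) x, N (a *: x) = `|a| * N x &
      forall x y, N (x + y) <= N x + N y].

Definition bounded_set (N : V -> R) (Y : set V) : Prop :=
  exists M : R, forall y, Y y -> N y <= M.

Definition interior_N (N : V -> R) (A : set V) : set V :=
  [set x | exists2 e : R, 0 < e & forall y, N (y - x) < e -> A y].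

Definition aff_hull (A : set V) : set V :=
  [set y | exists n (p : 'I_n -> V) (l : 'I_n -> R),
     [/\ forall i, A (p i), \sum_(i < n) l i = 1 & y = \sum_(i < n) l i *: p i]].

Definition relint_N (N : V -> R) (A : set V) : set V :=
  [set x | A x /\ exists2 e : R, 0 < e &
     forall y, aff_hull A y -> N (y - x) < e -> A y].

Definition convex_set (C : set V) : Prop :=
  forall x y (l : R), C x -> C y -> 0 <= l <= 1 -> C (l *: x + (1 - l) *: y).

Definition is_face (C' C : set V) : Prop :=
  [/\ convex_set C', C' `<=` C &
      forall x1 x2 (l : R), C x1 -> C x2 -> 0 < l < 1 ->
        C' (l *: x1 + (1 - l) *: x2) -> C' x1 /\ C' x2].

Definition extreme_points (C : set V) : set V :=
  [set x | C x /\ is_face [set x] C].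

Definition aff_indep (k n : nat) (p : 'I_n -> 'rV[R]_k) : Prop :=
  forall l : 'I_n -> R, \sum_(i < n) l i = 0 ->
    \sum_(i < n) l i *: p i = 0 -> forall i, l i = 0.

Definition conv_pts (n : nat) (p : 'I_n -> V) : set V :=
  [set x | exists l : 'I_n -> R,
     [/\ forall i, 0 <= l i, \sum_(i < n) l i = 1 & x = \sum_(i < n) l i *: p i]].

Definition is_simplex (C : set V) : Prop :=
  exists p : 'I_m.+1 -> V, aff_indep p /\ C = conv_pts p.

Definition simplicial_cover (Y : set V) (Cs : set (set V)) : Prop :=
  [/\ finite_set Cs,
      forall C, Cs C -> is_simplex C,
      Y `<=` \bigcup_(C in Cs) C &
      forall C1 C2, Cs C1 -> Cs C2 -> C1 `&` C2 !=set0 ->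
        is_face (C1 `&` C2) C1 /\ is_face (C1 `&` C2) C2].

Definition cover_faces (Cs : set (set V)) : set (set V) :=
  [set F | F !=set0 /\ exists2 C, Cs C & is_face F C].

Definition cover_vertices (Cs : set (set V)) : set V :=
  \bigcup_(C in Cs) extreme_points C.

(* g is the barycentric vertex interpolation function set for Cs
   (g v is the function g_v, for v in V(Cs)); it is characterized by its
   defining property: for x in relint(F), F in F(Cs), g_v(x) is the
   (unique, positive) barycentric weight of v in F if v in V(F), else 0. *)
Definition barycentric_interp (N : V -> R) (Cs : set (set V))
    (g : V -> V -> R) : Prop :=
  forall x F, (\bigcup_(C in Cs) C) x -> cover_faces Cs F -> relint_N N F x ->
    [/\ forall v, cover_vertices Cs v -> ~ extreme_points F v -> g v x = 0,
        forall w, extreme_points F w -> 0 < g w x,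
        \sum_(w \in extreme_points F) g w x = 1 &
        x = \sum_(w \in extreme_points F) g w x *: w].

End Defs.

(* Main.v *)
Require Import Defs.
From HB Require Import structures.
From mathcomp Require Import all_boot all_order all_algebra.
From mathcomp Require Import boolp classical_sets functions cardinality fsbigop reals.
From mathcomp Require Import ring lra.
Set Implicit Arguments. Unset Strict Implicit. Unset Printing Implicit Defensive.
Import Order.TTheory GRing.Theory Num.Theory.
Local Open Scope classical_set_scope.
Local Open Scope ring_scope.


Section LA.
Variables (R : fieldType) (k : nat) (P : finType) (pts : P -> 'rV[R]_k).

Definition liftM : 'M[R]_(#|P|, 1 + k) :=
  \matrix_r row_mx (1 : 'rV[R]_1) (pts (enum_val r)).

Lemma liftM_row q : row (enum_rank q) liftM = row_mx 1 (pts q).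
Proof. by rewrite rowK enum_rankK. Qed.

Lemma comb_sub (T : 'rV[R]_k) q1 q2 c :
  T = c *: pts q1 + (1 - c) *: pts q2 -> (row_mx 1 T <= liftM)%MS.
Proof.
move=> ->.
have -> : row_mx (1 : 'rV[R]_1) (c *: pts q1 + (1 - c) *: pts q2) =
  c *: row (enum_rank q1) liftM + (1 - c) *: row (enum_rank q2) liftM.
  rewrite !liftM_row !scale_row_mx add_row_mx ; congr row_mx; by rewrite -scalerDl addrC subrK scale1r.
by rewrite addmx_sub // scalemx_sub // row_sub.
Qed.

Lemma final_LA :
  (exists q1 q2 c, 0 = c *: pts q1 + (1 - c) *: pts q2) ->
  (forall i : 'I_k, exists q1 q2 c, delta_mx 0 i = c *: pts q1 + (1 - c) *: pts q2) ->
  exists xs : 'I_k.+1 -> P,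
    forall l : 'I_k.+1 -> R, \sum_(i < k.+1) l i = 0 ->
      \sum_(i < k.+1) l i *: pts (xs i) = 0 -> forall i, l i = 0.
Proof.
move=> [q1 [q2 [c H0]]] H1.
have S0 := comb_sub H0.
have full : row_full liftM.
  rewrite -sub1mx; apply/row_subP => r; rewrite row1.
  rewrite -(fintype.splitK r); case: (fintype.split r) => [j|i] /=.
    rewrite ord1 delta_mx_lshift.
    suff -> : delta_mx (0 : 'I_1) (0 : 'I_1) = 1 :> 'rV[R]_1 by [].
    by apply/rowP => a; rewrite ord1 !mxE.
  rewrite delta_mx_rshift.
  have [p1 [p2 [d Hd]]] := H1 i.
  have Si := comb_sub Hd.
  have -> : row_mx 0 (delta_mx 0 i) = row_mx 1 (delta_mx 0 i) - row_mx (1 : 'rV[R]_1) 0.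
    by rewrite opp_row_mx add_row_mx subrr oppr0 addr0.
  by rewrite addmx_sub // -scaleN1r scalemx_sub.
pose f := fullrankfun full.
exists (fun j => enum_val (f j)) => l Hs Hv i.
have fr := fullrowsub_free full.
set S := rowsub _ _ in fr.
have : (\row_j l j) *m S == 0.
  apply/eqP/rowP => c0; rewrite mulmx_sum_row !mxE summxE.
  rewrite -(fintype.splitK c0); case: (fintype.split c0) => [j|j] /=.
    rewrite -[RHS]Hs; apply: eq_bigr => a _.
    by rewrite !mxE (unsplitK (inl _ _)) ord1 mxE eqxx mulr1.
  transitivity ((\sum_(a < k.+1) l a *: pts (enum_val (f a))) 0 j); last by rewrite Hv mxE.
  by rewrite summxE; apply: eq_bigr => a _; rewrite !mxE (unsplitK (inr _ _)) ?mxE.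
move=> /eqP H; have := H; rewrite -(mul0mx _ S) => /(row_free_inj fr) /rowP /(_ i).
by rewrite !mxE.
Qed.
End LA.

Section G.
Variables (R : realType) (m : nat).
Local Notation V := 'rV[R]_m.

Lemma fsum_conv (U : zmodType) n (p : 'I_n -> V) (W : set V) (F : V -> U) :
  injective p -> W `<=` range p ->
  \sum_(w \in W) F w = \sum_(i < n | p i \in W) F (p i).
Proof.
move=> pinj Wp.
have EW : W = p @` [set i | W (p i)].
  apply/seteqP; split => [w Ww|w [i /= Wi <-] //].
  by have [i _ ei] := Wp w Ww; exists i => //=; rewrite ei.
rewrite {1}EW fsbig_image; last by move=> i j _ _; apply: pinj.
transitivity (\big[+%R/0]_(i <- index_enum 'I_n | p i \in W) F (p i)); last reflexivity.
rewrite (@bigfs U 0 +%R _ (index_enum 'I_n) (fun i => p i \in W) (fun i => F (p i))).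
- apply: eq_fsbigl; apply/seteqP; split => i /=; rewrite /= ?inE //.
- by rewrite /index_enum -enumT enum_uniq.
- by move=> i _; rewrite mem_index_enum.
Qed.

Lemma sum_ind (U : lmodType R) n (F : 'I_n -> U) i :
  \sum_(a < n) (a == i)%:R *: F a = F i :> U.
Proof.
rewrite (bigD1 i) //= eqxx scale1r big1 ?addr0 // => a /negPf ->.
by rewrite scale0r.
Qed.

Lemma sum_ind1 n (i : 'I_n) : \sum_(a < n) (a == i)%:R = 1 :> R.
Proof.
by rewrite (bigD1 i) //= eqxx big1 ?addr0 // => a /negPf ->.
Qed.

Lemma aff_indep_inj n (p : 'I_n -> V) : aff_indep p -> injective p.
Proof.
move=> H i j pij; apply/eqP; apply/negPn/negP => nij.
pose l := fun a : 'I_n => (a == i)%:R - (a == j)%:R : R.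
have := H l.
rewrite /l sumrB !sum_ind1 subrr => /(_ erefl).
have -> : \sum_(a < n) ((a == i)%:R - (a == j)%:R) *: p a = 0.
  under eq_bigr do rewrite scalerBl.
  by rewrite sumrB !sum_ind pij subrr.
move=> /(_ erefl i); rewrite eqxx (negPf nij) subr0 => /eqP.
by rewrite oner_eq0.
Qed.

Lemma conv_convex n (p : 'I_n -> V) : convex_set (conv_pts p).
Proof.
move=> x y t [lx [lx0 lx1 ->]] [ly [ly0 ly1 ->]] /andP[t0 t1].
exists (fun i => t * lx i + (1 - t) * ly i); split.
- by move=> i; rewrite addr_ge0 // mulr_ge0 // subr_ge0.
- by rewrite big_split /= -!mulr_sumr lx1 ly1 !mulr1 addrC subrK.
- rewrite !scaler_sumr -big_split /=; apply: eq_bigr => i _.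
  by rewrite [RHS]scalerDl !scalerA.
Qed.

Lemma ext_sub n (p : 'I_n -> V) : extreme_points (conv_pts p) `<=` range p.
Proof.
move=> x [[l [l0 l1 xE]] [_ _ Hf]].
have [i li] : exists i, 0 < l i.
  case: (pselect (exists i, 0 < l i)) => // H; exfalso.
  have : \sum_(i < n) l i = 0.
    apply: big1 => i _; apply/eqP; rewrite eq_le l0 andbT leNgt; apply/negP => h.
    by apply: H; exists i.
  by rewrite l1 => /eqP; rewrite oner_eq0.
have l1' : l i + \sum_(j < n | j != i) l j = 1.
  by rewrite -l1 [RHS](bigD1 i).
have xE' : x = l i *: p i + \sum_(j < n | j != i) l j *: p j by rewrite xE [LHS](bigD1 i).
case: (pselect (l i = 1)) => [li1|li1].
  exists i => //; rewrite xE' li1 scale1r big1 ?addr0 // => j ji.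
  have : \sum_(j < n | j != i) l j = 0 by rewrite li1 in l1'; lra.
  by move/psumr_eq0P => /(_ (fun j _ => l0 j) j ji) ->; rewrite scale0r.
have li1' : l i < 1.
  have : \sum_(j < n | j != i) l j >= 0 by apply: sumr_ge0 => j _; apply: l0.
  move: li1; rewrite -/(_ <> _) => /eqP; lra.
have d0 : 0 < 1 - l i by lra.
pose ly := fun j : 'I_n => if j == i then 0 else l j / (1 - l i).
pose y := \sum_(j < n) ly j *: p j.
have Cy : conv_pts p y.
  exists ly; split => //.
    by move=> j; rewrite /ly; case: eqP => // _; rewrite divr_ge0 // ltW.
  rewrite (bigD1 i) //= /ly eqxx add0r.
  rewrite (eq_bigr (fun j => l j / (1 - l i))); last by move=> j /negPf ->.
  rewrite -mulr_suml.
  have -> : \sum_(j < n | j != i) l j = 1 - l i by lra.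
  by rewrite divff // lt0r_neq0.
have Cp : conv_pts p (p i).
  exists (fun j => (j == i)%:R); split; [by move=> j; rewrite ler0n | by rewrite sum_ind1 | by rewrite sum_ind].
have Cx : conv_pts p x by exists l.
have xE2 : x = l i *: p i + (1 - l i) *: y.
  rewrite xE' /y scaler_sumr [in RHS](bigD1 i) //= /ly eqxx !scale0r scaler0 add0r.
  congr (_ + _); apply: eq_bigr => j /negPf ->.
  by rewrite scalerA mulrC -mulrA mulVf ?mulr1 // lt0r_neq0.
have [Hpi _] := Hf (p i) y (l i) Cp Cy (ltac:(apply/andP; split => //)) (esym xE2).
by exists i.
Qed.

Section Key.
Variables (N : V -> R) (Nn : is_norm N).

Lemma N0 : N 0 = 0.
Proof. by case: Nn => _ hom _; have := hom 0 0; rewrite scale0r normr0 mul0r. Qed.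

Lemma NN x : N (- x) = N x.
Proof. by case: Nn => _ hom _; rewrite -scaleN1r hom normrN normr1 mul1r. Qed.

Lemma Nge0 x : 0 <= N x.
Proof.
case: Nn => _ _ tri; have := tri x (- x); rewrite subrr N0 NN.
lra.
Qed.

Lemma Ntri y b x0 : N (y - x0) <= N (y - b) + N (b - x0).
Proof. by case: Nn => _ _ tri; have := tri (y - b) (b - x0); rewrite addrA subrK. Qed.

Lemma NZ (a : R) x : 0 <= a -> N (a *: x) = a * N x.
Proof. by case: Nn => _ hom _ a0; rewrite hom ger0_norm. Qed.

Lemma key (Y : set V) (Cs : set (set V)) (g : V -> V -> R) k (e : 'I_k -> V) :
  (forall C, Cs C -> is_simplex C) -> barycentric_interp N Cs g ->
  (forall i, cover_vertices Cs (e i)) ->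
  (forall C, Cs C -> interior_N N Y `&` interior_N N C !=set0) ->
  forall v, cover_vertices Cs v ->
  exists ab : V * V, [/\ Y ab.1, Y ab.2 & exists c : R,
    \row_(i < k) ((e i == v)%:R : R) =
       c *: (\row_(i < k) g (e i) ab.2) + (1 - c) *: (\row_(i < k) g (e i) ab.1)].
Proof.
move=> Csimp Hg He Hint v [C CsC Ev].
have [p [pind CE]] := Csimp C CsC.
have [x0 [[eY eY0 HY] [eC eC0 HC]]] := Hint C CsC.
pose eps := Num.min eY eC.
have eps0 : 0 < eps by rewrite lt_min eY0 eC0.
have epsY : eps <= eY by rewrite ge_min lexx.
have epsC : eps <= eC by rewrite ge_min lexx orbT.
pose d := N (v - x0).
have d0 : 0 <= d by apply: Nge0.
pose del := eps / (2 * (d + eps)).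
have dpos : 0 < 2 * (d + eps) by lra.
have dE : del * (2 * (d + eps)) = eps by rewrite /del divfK // lt0r_neq0.
have del0 : 0 < del by rewrite /del divr_gt0 //; lra.
have hdel : del * d < eps / 2 by nra.
pose b := x0 + del *: (v - x0).
have Nb : N (b - x0) < eps / 2.
  by rewrite /b addrAC subrr add0r NZ ?(ltW del0).
have Yx0 : Y x0 by apply: HY; rewrite subrr N0.
have Yb : Y b by apply: HY; lra.
have Cx0 : C x0 by apply: HC; rewrite subrr N0.
have Cball : forall y, N (y - b) < eps / 2 -> C y.
  move=> y Hy; apply: HC; have := Ntri y b x0; lra.
have Cb : C b by apply: Cball; rewrite subrr N0; lra.
have FC : cover_faces Cs C.
  split; first by exists x0.
  exists C => //; split; [rewrite CE; apply: conv_convex | by [] | by move=> x1 x2 l H1 H2 _ _].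
have Ux0 : (\bigcup_(C in Cs) C) x0 by exists C.
have Ub : (\bigcup_(C in Cs) C) b by exists C.
have Rx0 : relint_N N C x0 by split => //; exists eC => // y _; apply: HC.
have Rb : relint_N N C b by split => //; exists (eps / 2); [lra | move=> y _; apply: Cball].
have [Za _ Sa Ra] := Hg x0 C Ux0 FC Rx0.
have [Zb _ Sb Rb'] := Hg b C Ub FC Rb.
have WP : extreme_points C `<=` range p by rewrite CE; apply: ext_sub.
have pinj := aff_indep_inj pind.
have claim : forall u, cover_vertices Cs u ->
    g u b = (1 - del) * g u x0 + del * (u == v)%:R.
  move=> u Hu; case: (pselect (extreme_points C u)) => [Wu|nWu]; last first.
    rewrite (Za u Hu nWu) (Zb u Hu nWu).
    have -> : (u == v) = false by apply/negP => /eqP uv; apply: nWu; rewrite uv.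
    by rewrite mulr0 mulr0 addr0.
  pose W := extreme_points C.
  pose h := fun w => g w b - ((1 - del) * g w x0 + del * (w == v)%:R).
  have [iu _ pu] := WP u Wu.
  have [iv _ pv] := WP v Ev.
  have Sa' : \sum_(i < m.+1 | p i \in W) g (p i) x0 = 1 by rewrite -(@fsum_conv _ _ p W (fun w => g w x0) pinj WP).
  have Sb' : \sum_(i < m.+1 | p i \in W) g (p i) b = 1 by rewrite -(@fsum_conv _ _ p W (fun w => g w b) pinj WP).
  have Ra' : \sum_(i < m.+1 | p i \in W) g (p i) x0 *: p i = x0.
    by rewrite -(@fsum_conv _ _ p W (fun w => g w x0 *: w) pinj WP) -Ra.
  have Rb2 : \sum_(i < m.+1 | p i \in W) g (p i) b *: p i = b.
    by rewrite -(@fsum_conv _ _ p W (fun w => g w b *: w) pinj WP) -Rb'.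
  have ivW : p iv \in W by rewrite pv; apply: mem_set.
  have Sv : \sum_(i < m.+1 | p i \in W) ((p i == v)%:R : R) = 1.
    rewrite (bigD1 iv) //= pv eqxx big1 ?addr0 // => j /andP[_ jv].
    by rewrite -pv (inj_eq pinj) (negPf jv).
  have Rv : \sum_(i < m.+1 | p i \in W) ((p i == v)%:R : R) *: p i = v.
    rewrite (bigD1 iv) //= pv eqxx scale1r big1 ?addr0 // => j /andP[_ jv].
    by rewrite -pv (inj_eq pinj) (negPf jv) scale0r.
  pose l := fun i => if p i \in W then h (p i) else 0.
  have Hl := pind l.
  have sl : \sum_(i < m.+1) l i = 0.
    rewrite /l -big_mkcond /h sumrB big_split /= -!mulr_sumr Sa' Sb' Sv.
    lra.
  have vl : \sum_(i < m.+1) l i *: p i = 0.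
    transitivity (\sum_(i < m.+1 | p i \in W) h (p i) *: p i).
      rewrite [RHS]big_mkcond; apply: eq_bigr => i _; rewrite /l.
      by case: ifP => _ //; rewrite scale0r.
    rewrite /h.
    under eq_bigr do rewrite scalerBl scalerDl -!scalerA.
    rewrite sumrB big_split /= -!scaler_sumr Ra' Rb2 Rv /b.
    rewrite scalerBl scale1r scalerBr.
    rewrite scalerA -/del.
    apply/eqP; rewrite subr_eq0; apply/eqP.
    by rewrite [LHS]addrA [LHS]addrAC.
  have := Hl sl vl iu; rewrite /l pu ifT; last by apply: mem_set.
  by rewrite /h => /eqP; rewrite subr_eq0 => /eqP.
exists (x0, b); split => //; exists del^-1.
apply/rowP => i; rewrite !mxE claim ?He //.
rewrite /=; move: (g (e i) x0) ((e i == v)%:R : R) => a z.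
have dn : del != 0 by rewrite lt0r_neq0.
by field.
Qed.
End Key.
End G.

Theorem proposition3p11 (R : realType) (m : nat) (N : 'rV[R]_m -> R)
  (Y : set 'rV[R]_m) (Cs : set (set 'rV[R]_m)) (g : 'rV[R]_m -> 'rV[R]_m -> R)
  (v0 : 'rV[R]_m) (k : nat) (e : 'I_k -> 'rV[R]_m) :
  is_norm N -> bounded_set N Y -> simplicial_cover Y Cs ->
  barycentric_interp N Cs g ->
  cover_vertices Cs v0 ->
  (forall i, cover_vertices Cs (e i) /\ e i <> v0) ->
  injective e ->
  (forall v, cover_vertices Cs v -> v <> v0 -> exists i, e i = v) ->
  (forall C, Cs C -> interior_N N Y `&` interior_N N C !=set0) ->
  exists xs : 'I_k.+1 -> 'rV[R]_m,
    (forall j, Y (xs j)) /\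
    aff_indep (fun j => \row_(i < k) g (e i) (xs j)).
Proof.
move=> Nn _ [_ Csimp _ _] Hg Hv0 He einj _ Hint.
have He' : forall i, cover_vertices Cs (e i) by move=> i; case: (He i).
have K := key Nn Csimp Hg He' Hint.
have : forall o : option 'I_k, exists ab : 'rV[R]_m * 'rV[R]_m,
    [/\ Y ab.1, Y ab.2 & exists c : R,
      \row_(i < k) ((e i == oapp e v0 o)%:R : R) =
       c *: (\row_(i < k) g (e i) ab.2) + (1 - c) *: (\row_(i < k) g (e i) ab.1)].
  by move=> o; apply: K; case: o => [i|] /=; [exact: He' | exact: Hv0].
case/choice => AB HAB.
pose pt := fun q : (option 'I_k * bool)%type => if q.2 then (AB q.1).2 else (AB q.1).1.
have H0 : exists q1 q2 (c : R), 0 = c *: (\row_(i < k) g (e i) (pt q1)) +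
    (1 - c) *: (\row_(i < k) g (e i) (pt q2)).
  have [_ _ [c Hc]] := HAB None.
  exists (None, true), (None, false), c; rewrite -Hc /=.
  apply/rowP => i; rewrite !mxE.
  by have [_ /eqP /negPf ->] := He i.
have H1 : forall i : 'I_k, exists q1 q2 (c : R), delta_mx 0 i = c *: (\row_(i < k) g (e i) (pt q1)) +
    (1 - c) *: (\row_(i < k) g (e i) (pt q2)).
  move=> i; have [_ _ [c Hc]] := HAB (Some i).
  exists (Some i, true), (Some i, false), c; rewrite -Hc /=.
  by apply/rowP => j; rewrite !mxE (inj_eq einj).
have [xs Hxs] := final_LA H0 H1.
exists (fun j => pt (xs j)); split => //.
move=> j; rewrite /pt; case: (xs j) => o [] /=; by have [] := HAB o.
Qed.
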